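(* Let $n\ge2$ and let $E$ be a non-empty subset of $\bar\Delta^{(n)}$. There exists a generalized $n$-system $\mathbf{P}$ on $[1,\infty)$ such that, for each $j=1,\dots,n$, \[ \liminf_{q\to\infty}\psi_j\big(q^{-1}\mathbf{P}(q)\big)=\inf\psi_j(E)\quad\text{and}\quad \limsup_{q\to\infty}\psi_j\big(q^{-1}\mathbf{P}(q)\big)=\frac{j}{n}. \]
   Context: $\bar\Delta^{(n)}=\{(a_1,\dots,a_n)\in\mathbb{R}^n: 0\le a_1\le\cdots\le a_n,\ a_1+\cdots+a_n=1\}$; for $j=1,\dots,n$, $\psi_j\colon\bar\Delta^{(n)}\to\mathbb{R}$ is $\psi_j(a_1,\dots,a_n)=a_1+\cdots+a_j$. A map $\mathbf{P}\colon I\to\mathbb{R}^n$ on an interval $I\subseteq[0,\infty)$ with non-empty interior is continuous piecewise linear if it is continuous, the set of points of $I$ where it is not differentiable (including endpoints of $I$ lying in $I$) is discrete in $I$, and its derivative is locally constant off that set. A generalized $n$-system on $I$ is a continuous piecewise linear map $\mathbf{P}=(P_1,\dots,P_n)\colon I\to\mathbb{R}^n$ such that: (G1) for each $q\in I$, $0\le P_1(q)\le\cdots\le P_n(q)$ and $P_1(q)+\cdots+P_n(q)=q$; (G2) on each non-empty open subinterval $H$ of $I$ on which $\mathbf{P}$ is differentiable, there are integers $1\le \underline{r}\le\overline{r}\le n$ such that $P_{\underline r},\dots,P_{\overline r}$ coincide on $H$ and have slope $1/(\overline r-\underline r+1)$, while every other $P_j$ is constant on $H$; (G3) if $q$ is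 an interior point of $I$ where $\mathbf{P}$ is not differentiable, and $\underline r,\overline r,\underline s,\overline s$ are the integers with $P_j'(q^-)=1/(\overline r-\underline r+1)$ for $\underline r\le j\le\overline r$ and $P_j'(q^+)=1/(\overline s-\underline s+1)$ for $\underline s\le j\le \overline s$, and if $\underline r<\overline s$, then $P_{\underline r}(q)=\cdots=P_{\overline s}(q)$. *)

(* Defs.v *)
From Stdlib Require Import Reals Lra Lia List Bool.
Open Scope R_scope.

(* Points of R^n are represented as functions  nat -> R  read on indices 1..n. *)

Fixpoint psum (a : nat -> R) (j : nat) : R :=
  match j with
  | O => 0
  | S k => psum a k + a (S k)
  end.

Definition in_Delta_bar (n : nat) (a : nat -> R) : Prop :=
  0 <= a 1%nat /\
  (forall j : nat, (1 <= j < n)%nat -> a j <= a (S j)) /\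
  psum a n = 1.

Definition psi (j : nat) (a : nat -> R) : R := psum a j.

Definition is_inf (S : R -> Prop) (m : R) : Prop :=
  (forall x, S x -> m <= x) /\
  (forall m', (forall x, S x -> m' <= x) -> m' <= m).

Definition is_liminf_infty (f : R -> R) (L : R) : Prop :=
  forall eps, eps > 0 ->
    (exists Q, forall q, q >= Q -> f q > L - eps) /\
    (forall Q, exists q, q >= Q /\ f q < L + eps).

Definition is_limsup_infty (f : R -> R) (L : R) : Prop :=
  forall eps, eps > 0 ->
    (exists Q, forall q, q >= Q -> f q < L + eps) /\
    (forall Q, exists q, q >= Q /\ f q > L - eps).

(* A map P : I -> R^n is represented by P : nat -> R -> R, components P 1 .. P n. *)

Definition diff_at (n : nat) (P : nat -> R -> R) (q : R) : Prop :=
  forall j, (1 <= j <= n)%nat -> exists l, derivable_pt_lim (P j) q l.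

Definition nondiff_pt (n : nat) (a : R) (P : nat -> R -> R) (q : R) : Prop :=
  q = a \/ (q > a /\ ~ diff_at n P q).

Definition cont_pl (n : nat) (a : R) (P : nat -> R -> R) : Prop :=
  (forall j, (1 <= j <= n)%nat -> forall q, q >= a ->
     forall eps, eps > 0 -> exists delta, delta > 0 /\
       forall x, x >= a -> Rabs (x - q) < delta -> Rabs (P j x - P j q) < eps) /\
  (* the set of non-differentiability points is discrete (locally finite) in I *)
  (forall q, q >= a -> exists eps, eps > 0 /\ exists l : list R,
     forall r, nondiff_pt n a P r -> Rabs (r - q) < eps -> In r l) /\
  (forall q, q >= a -> ~ nondiff_pt n a P q ->
     exists eps, eps > 0 /\ forall x, Rabs (x - q) < eps -> x >= a ->
       ~ nondiff_pt n a P x ->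
       forall j, (1 <= j <= n)%nat -> forall l1 l2,
         derivable_pt_lim (P j) q l1 -> derivable_pt_lim (P j) x l2 -> l1 = l2).

Definition G2_pattern (n : nat) (P : nat -> R -> R) (c d : R) (rlo rhi : nat) : Prop :=
  (1 <= rlo)%nat /\ (rlo <= rhi)%nat /\ (rhi <= n)%nat /\
  (forall j, (rlo <= j <= rhi)%nat -> forall x, c < x < d ->
     P j x = P rlo x /\ derivable_pt_lim (P j) x (1 / INR (rhi - rlo + 1))) /\
  (forall j, (1 <= j <= n)%nat -> ~ (rlo <= j <= rhi)%nat ->
     forall x y, c < x < d -> c < y < d -> P j x = P j y).

Definition slopes_on (n : nat) (P : nat -> R -> R) (c d : R) (rlo rhi : nat) : Prop :=
  (1 <= rlo)%nat /\ (rlo <= rhi)%nat /\ (rhi <= n)%nat /\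
  forall x, c < x < d -> forall j, (1 <= j <= n)%nat ->
    derivable_pt_lim (P j) x
      (if andb (Nat.leb rlo j) (Nat.leb j rhi) then 1 / INR (rhi - rlo + 1) else 0).

Definition left_slopes (n : nat) (P : nat -> R -> R) (q : R) (rlo rhi : nat) : Prop :=
  exists eps, eps > 0 /\ slopes_on n P (q - eps) q rlo rhi.

Definition right_slopes (n : nat) (P : nat -> R -> R) (q : R) (rlo rhi : nat) : Prop :=
  exists eps, eps > 0 /\ slopes_on n P q (q + eps) rlo rhi.

Definition gen_n_system (n : nat) (a : R) (P : nat -> R -> R) : Prop :=
  cont_pl n a P /\
  (forall q, q >= a ->
     0 <= P 1%nat q /\
     (forall j, (1 <= j < n)%nat -> P j q <= P (S j) q) /\
     psum (fun j => P j q) n = q) /\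
  (forall c d, a <= c -> c < d -> (forall x, c < x < d -> diff_at n P x) ->
     exists rlo rhi, G2_pattern n P c d rlo rhi) /\
  (forall q, q > a -> ~ diff_at n P q ->
     forall rlo rhi slo shi,
       left_slopes n P q rlo rhi -> right_slopes n P q slo shi ->
       (rlo < shi)%nat ->
       forall j, (rlo <= j <= shi)%nat -> P j q = P rlo q).

(* Main.v *)
Require Import Defs.
From Stdlib Require Import Reals Lra Lia List Bool ClassicalEpsilon Classical Arith.
Open Scope R_scope.

Lemma psum_ext f g j : (forall i, (1 <= i <= j)%nat -> f i = g i) -> psum f j = psum g j.
Proof. induction j; simpl; intros H; auto. rewrite IHj, H; auto; try lia. intros; apply H; lia. Qed.

Lemma psum_plus f g j : psum (fun i => f i + g i) j = psum f j + psum g j.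
Proof. induction j; simpl; [lra|]. rewrite IHj; lra. Qed.

Lemma psum_scal c f j : psum (fun i => c * f i) j = c * psum f j.
Proof. induction j; simpl; [lra|]. rewrite IHj; lra. Qed.

Lemma psum_le f g j : (forall i, (1 <= i <= j)%nat -> f i <= g i) -> psum f j <= psum g j.
Proof. induction j; simpl; intros H; [lra|]. assert (H1 := H (S j) ltac:(lia)).
  assert (psum f j <= psum g j) by (apply IHj; intros; apply H; lia). lra. Qed.

Lemma psum_nonneg f j : (forall i, (1 <= i <= j)%nat -> 0 <= f i) -> 0 <= psum f j.
Proof. intros H. replace 0 with (psum (fun _ => 0) j). apply psum_le; auto.
  induction j; simpl; auto. rewrite IHj; [lra|]. intros; apply H; lia. Qed.

Lemma psum_tail_le a b j N : (j <= N)%nat -> (forall i, (j < i <= N)%nat -> a i <= b i) ->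
  psum a N - psum a j <= psum b N - psum b j.
Proof. induction N; intros Hj H.
  - assert (j = 0)%nat by lia. subst. simpl. lra.
  - destruct (Nat.eq_dec j (S N)). subst. lra.
    simpl. assert (H1 := H (S N) ltac:(lia)).
    assert (psum a N - psum a j <= psum b N - psum b j) by (apply IHN; [lia| intros; apply H; lia]). lra. Qed.

Lemma psum_mono f j N : (j <= N)%nat -> (forall i, (1 <= i <= N)%nat -> 0 <= f i) -> psum f j <= psum f N.
Proof. intros Hj H. assert (psum (fun _ => 0) N - psum (fun _ => 0) j <= psum f N - psum f j).
  { apply psum_tail_le; auto. intros; apply H; lia. }
  assert (forall k, psum (fun _ => 0) k = 0) by (induction k; simpl; lra). rewrite !H1 in H0. lra. Qed.

Lemma psum_term f j i : (forall i, (1 <= i <= j)%nat -> 0 <= f i) -> (1 <= i <= j)%nat -> f i <= psum f j.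
Proof. intros H Hi. assert (psum f (i - 1) + f i = psum f i).
  { destruct i; [lia|]. simpl. replace (i - 0)%nat with i by lia. reflexivity. }
  assert (0 <= psum f (i-1)) by (apply psum_nonneg; intros; apply H; lia).
  assert (psum f i <= psum f j) by (apply psum_mono; auto; lia). lra. Qed.

Definition ind (a b i : nat) : bool := andb (Nat.leb a i) (Nat.leb i b).
Definition val (a b i : nat) : R := if ind a b i then 1 / INR (b - a + 1) else 0.
Definition indR a b i : R := if ind a b i then 1 else 0.

Lemma ind_true a b i : ind a b i = true <-> (a <= i <= b)%nat.
Proof. unfold ind. rewrite andb_true_iff, !Nat.leb_le. tauto. Qed.
Lemma ind_false a b i : ind a b i = false <-> ~(a <= i <= b)%nat.
Proof. rewrite <- ind_true. destruct (ind a b i); split; congruence. Qed.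

Lemma psum_indR a b N : (1 <= a)%nat -> psum (indR a b) N = INR (Nat.min b N + 1 - a).
Proof. intros Ha. induction N; simpl psum.
  - replace (Nat.min b 0 + 1 - a)%nat with 0%nat by lia. simpl; lra.
  - rewrite IHN. unfold indR. destruct (ind a b (S N)) eqn:E.
    + apply ind_true in E. replace (Nat.min b (S N) + 1 - a)%nat with (S (Nat.min b N + 1 - a)) by lia.
      rewrite S_INR. lra.
    + apply ind_false in E. replace (Nat.min b (S N) + 1 - a)%nat with (Nat.min b N + 1 - a)%nat by lia. lra.
Qed.

Lemma psum_indR_full a b n : (1 <= a <= b)%nat -> (b <= n)%nat -> psum (indR a b) n = INR (b - a + 1).
Proof. intros. rewrite psum_indR by lia. f_equal. lia. Qed.

Lemma INR_pos k : (1 <= k)%nat -> 0 < INR k.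
Proof. intros. apply lt_0_INR. lia. Qed.

Lemma val_indR a b i : (a <= b)%nat -> val a b i = indR a b i / INR (b - a + 1).
Proof. intros. unfold val, indR. destruct (ind a b i); [lra|]. unfold Rdiv. ring. Qed.

Lemma val_nonneg a b i : 0 <= val a b i.
Proof. unfold val. destruct (ind a b i). apply Rlt_le. unfold Rdiv. rewrite Rmult_1_l. apply Rinv_0_lt_compat, INR_pos; lia. lra. Qed.

Lemma val_le1 a b i : val a b i <= 1.
Proof. unfold val. destruct (ind a b i); [|lra]. assert (1 <= INR (b - a + 1)).
  { replace 1 with (INR 1) by reflexivity. apply le_INR. lia. }
  unfold Rdiv. rewrite Rmult_1_l. rewrite <- Rinv_1. apply Rinv_le_contravar; lra. Qed.

Lemma val_pos a b i : ind a b i = true -> 0 < val a b i.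
Proof. intros H. unfold val. rewrite H. unfold Rdiv. rewrite Rmult_1_l. apply Rinv_0_lt_compat, INR_pos; lia. Qed.

Definition Tg n (St : nat -> nat -> R) m := psum (St m) n.

Record good n (St : nat -> nat -> R) (lo hi : nat -> nat) : Prop := {
  g_lohi : forall m, (1 <= lo m <= hi m /\ hi m <= n)%nat;
  g_T0 : Tg n St 0 = 1;
  g_step : forall m, exists v, v > 0 /\ forall i, (1 <= i <= n)%nat ->
     St (S m) i = St m i + v * indR (lo m) (hi m) i;
  g_sorted : forall m, 0 <= St m 1%nat /\ forall i, (1 <= i < n)%nat -> St m i <= St m (S i);
  g_grp : forall m i, (lo m <= i <= hi m)%nat -> St m i = St m (lo m);
  g_G3 : forall m, (lo m < hi (S m))%nat -> forall i, (lo m <= i <= hi (S m))%nat ->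
     St (S m) i = St (S m) (lo m);
  g_diff : forall m, exists i, (1 <= i <= n)%nat /\ ind (lo m) (hi m) i <> ind (lo (S m)) (hi (S m)) i;
  g_unb : forall M, exists m, Tg n St m > M
}.

Lemma psum_val a b n : (1 <= a <= b)%nat -> (b <= n)%nat -> psum (val a b) n = 1.
Proof. intros. rewrite (psum_ext _ (fun i => / INR (b - a + 1) * indR a b i)).
  2:{ intros. rewrite val_indR by lia. unfold Rdiv. ring. }
  rewrite psum_scal, psum_indR_full by lia. field. apply Rgt_not_eq, INR_pos; lia. Qed.


Lemma T_step n St lo hi (G : good n St lo hi) m : exists v, v > 0 /\
  Tg n St (S m) = Tg n St m + v * INR (hi m - lo m + 1) /\
  forall i, (1 <= i <= n)%nat -> St (S m) i = St m i + v * indR (lo m) (hi m) i.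
Proof. destruct (g_step _ _ _ _ G m) as [v [vp H]]. exists v; repeat split; auto.
  unfold Tg. rewrite (psum_ext _ _ _ H). rewrite psum_plus, psum_scal.
  destruct (g_lohi _ _ _ _ G m). rewrite psum_indR_full by lia. auto. Qed.

Lemma step_val n St lo hi (G : good n St lo hi) m i : (1 <= i <= n)%nat ->
  St (S m) i = St m i + (Tg n St (S m) - Tg n St m) * val (lo m) (hi m) i.
Proof. intros Hi. destruct (T_step _ _ _ _ G m) as [v [vp [HT H]]]. rewrite H by auto.
  rewrite HT. destruct (g_lohi _ _ _ _ G m). rewrite val_indR by lia. field.
  apply Rgt_not_eq, INR_pos; lia. Qed.

Lemma T_incr n St lo hi (G : good n St lo hi) m : Tg n St m < Tg n St (S m).
Proof. destruct (T_step _ _ _ _ G m) as [v [vp [HT H]]]. rewrite HT.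
  destruct (g_lohi _ _ _ _ G m). assert (0 < INR (hi m - lo m + 1)) by (apply INR_pos; lia). nra. Qed.

Lemma T_mono n St lo hi (G : good n St lo hi) m m' : (m <= m')%nat -> Tg n St m <= Tg n St m'.
Proof. induction 1; [lra|]. pose proof (T_incr _ _ _ _ G m0). lra. Qed.

Lemma T_ge1 n St lo hi (G : good n St lo hi) m : 1 <= Tg n St m.
Proof. rewrite <- (g_T0 _ _ _ _ G). apply (T_mono _ _ _ _ G). lia. Qed.

Lemma piece_exists n St lo hi (G : good n St lo hi) t : 1 <= t -> exists m, Tg n St m <= t < Tg n St (S m).
Proof. intros Ht. destruct (g_unb _ _ _ _ G t) as [M HM]. induction M.
  - rewrite (g_T0 _ _ _ _ G) in HM. lra.
  - destruct (Rlt_dec t (Tg n St M)). apply IHM; lra. exists M; lra. Qed.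

Lemma piece_unique n St lo hi (G : good n St lo hi) t m m' :
  Tg n St m <= t < Tg n St (S m) -> Tg n St m' <= t < Tg n St (S m') -> m = m'.
Proof. intros H1 H2. destruct (Nat.lt_total m m') as [h|[h|h]]; auto.
  - pose proof (T_mono _ _ _ _ G (S m) m' h). lra.
  - pose proof (T_mono _ _ _ _ G (S m') m h). lra. Qed.

Definition idx n St t := epsilon (inhabits 0%nat) (fun m => Tg n St m <= t < Tg n St (S m)).

Lemma idx_spec n St lo hi (G : good n St lo hi) t : 1 <= t ->
  Tg n St (idx n St t) <= t < Tg n St (S (idx n St t)).
Proof. intros. unfold idx. apply epsilon_spec. eapply piece_exists; eauto. Qed.

Lemma idx_eq n St lo hi (G : good n St lo hi) t m : Tg n St m <= t < Tg n St (S m) -> idx n St t = m.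
Proof. intros H. eapply piece_unique; eauto. apply (idx_spec _ _ _ _ G). pose proof (T_ge1 _ _ _ _ G m). lra. Qed.

Definition Pgen n St (lo hi : nat -> nat) (i : nat) (t : R) : R :=
  St (idx n St t) i + (t - Tg n St (idx n St t)) * val (lo (idx n St t)) (hi (idx n St t)) i.

Lemma P_in_piece n St lo hi (G : good n St lo hi) m i t : Tg n St m <= t < Tg n St (S m) ->
  Pgen n St lo hi i t = St m i + (t - Tg n St m) * val (lo m) (hi m) i.
Proof. intros H. unfold Pgen. rewrite (idx_eq _ _ _ _ G t m H). auto. Qed.

Lemma P_at_T n St lo hi (G : good n St lo hi) m i : Pgen n St lo hi i (Tg n St m) = St m i.
Proof. rewrite (P_in_piece _ _ _ _ G m). ring. pose proof (T_incr _ _ _ _ G m). lra. Qed.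

Lemma P_left n St lo hi (G : good n St lo hi) m i t : (1 <= i <= n)%nat -> Tg n St m < t <= Tg n St (S m) ->
  Pgen n St lo hi i t = St (S m) i + (t - Tg n St (S m)) * val (lo m) (hi m) i.
Proof. intros Hi H. destruct (Req_dec t (Tg n St (S m))).
  - subst. rewrite P_at_T by auto. ring.
  - rewrite (P_in_piece _ _ _ _ G m) by lra. rewrite (step_val _ _ _ _ G m i Hi). ring. Qed.

Lemma P_closed n St lo hi (G : good n St lo hi) m i t : (1 <= i <= n)%nat -> Tg n St m <= t <= Tg n St (S m) ->
  Pgen n St lo hi i t = St m i + (t - Tg n St m) * val (lo m) (hi m) i.
Proof. intros Hi H. destruct (Req_dec t (Tg n St (S m))) as [He|He].
  - rewrite (P_left _ _ _ _ G m) by (auto; pose proof (T_incr _ _ _ _ G m); lra).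
    rewrite (step_val _ _ _ _ G m i Hi). rewrite He. ring.
  - apply (P_in_piece _ _ _ _ G). lra. Qed.

Lemma affine_nonneg a b L tau : 0 <= a -> 0 <= a + L * b -> 0 <= tau <= L -> 0 <= a + tau * b.
Proof. intros. destruct (Rle_dec 0 b). nra. nra. Qed.

Lemma St_mono n St lo hi (G : good n St lo hi) m m' i : (1 <= i <= n)%nat -> (m <= m')%nat -> St m i <= St m' i.
Proof. intros Hi. induction 1; [lra|]. destruct (g_step _ _ _ _ G m0) as [v [vp Hv]]. rewrite Hv by auto.
  unfold indR. destruct (ind _ _ _); nra. Qed.

Lemma P_G1 n St lo hi (G : good n St lo hi) t : 1 <= t ->
  0 <= Pgen n St lo hi 1%nat t /\
  (forall j, (1 <= j < n)%nat -> Pgen n St lo hi j t <= Pgen n St lo hi (S j) t) /\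
  psum (fun j => Pgen n St lo hi j t) n = t.
Proof. intros Ht. pose proof (idx_spec _ _ _ _ G t Ht) as Hsp. set (m := idx n St t) in *.
  pose proof (T_incr _ _ _ _ G m) as Hinc.
  destruct (g_sorted _ _ _ _ G m) as [H0 Hs]. destruct (g_sorted _ _ _ _ G (S m)) as [H0' Hs'].
  split; [|split].
  - unfold Pgen; fold m. pose proof (val_nonneg (lo m) (hi m) 1). nra.
  - intros j Hj. unfold Pgen; fold m.
    pose proof (Hs j Hj) as H3. pose proof (Hs' j Hj) as H4.
    rewrite !(step_val _ _ _ _ G m) in H4 by lia.
    set (L := Tg n St (S m) - Tg n St m) in *.
    assert (0 <= (St m (S j) - St m j) + (t - Tg n St m) * (val (lo m) (hi m) (S j) - val (lo m) (hi m) j)).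
    { apply (affine_nonneg _ _ L); [lra|lra|]. unfold L. lra. } lra.
  - unfold Pgen; fold m. rewrite psum_plus, psum_scal. destruct (g_lohi _ _ _ _ G m).
    rewrite psum_val by lia. fold (Tg n St m). ring. Qed.

Lemma psum_minus f g j : psum (fun i => f i - g i) j = psum f j - psum g j.
Proof. induction j; simpl; [lra|]. rewrite IHj; lra. Qed.

Lemma P_mono n St lo hi (G : good n St lo hi) i t1 t2 : (1 <= i <= n)%nat -> 1 <= t1 <= t2 ->
  Pgen n St lo hi i t1 <= Pgen n St lo hi i t2.
Proof. intros Hi Ht.
  pose proof (idx_spec _ _ _ _ G t1 ltac:(lra)) as H1. pose proof (idx_spec _ _ _ _ G t2 ltac:(lra)) as H2.
  set (m1 := idx n St t1) in *. set (m2 := idx n St t2) in *.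
  rewrite (P_in_piece _ _ _ _ G m1) by lra. rewrite (P_in_piece _ _ _ _ G m2) by lra.
  destruct (Nat.lt_total m1 m2) as [h|[h|h]].
  - pose proof (St_mono _ _ _ _ G (S m1) m2 i Hi h). rewrite (step_val _ _ _ _ G m1 i Hi) in H.
    pose proof (val_nonneg (lo m1) (hi m1) i). pose proof (val_nonneg (lo m2) (hi m2) i). nra.
  - rewrite h. pose proof (val_nonneg (lo m2) (hi m2) i). nra.
  - pose proof (T_mono _ _ _ _ G (S m2) m1 h). lra. Qed.

Lemma P_lip n St lo hi (G : good n St lo hi) j t1 t2 : (1 <= j <= n)%nat -> 1 <= t1 <= t2 ->
  0 <= Pgen n St lo hi j t2 - Pgen n St lo hi j t1 <= t2 - t1.
Proof. intros Hj Ht. split. pose proof (P_mono _ _ _ _ G j t1 t2 Hj Ht). lra.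
  destruct (P_G1 _ _ _ _ G t1 ltac:(lra)) as [_ [_ S1]]. destruct (P_G1 _ _ _ _ G t2 ltac:(lra)) as [_ [_ S2]].
  assert (psum (fun i => Pgen n St lo hi i t2 - Pgen n St lo hi i t1) n = t2 - t1).
  { rewrite psum_minus. lra. }
  rewrite <- H. apply (psum_term (fun i => Pgen n St lo hi i t2 - Pgen n St lo hi i t1)); auto.
  intros. pose proof (P_mono _ _ _ _ G i t1 t2 H0 Ht). lra. Qed.

Lemma deriv_affine a b s x : derivable_pt_lim (fun t => a + (t - b) * s) x s.
Proof. intros eps He. exists (mkposreal 1 Rlt_0_1). intros h Hh _.
  replace ((a + (x + h - b) * s - (a + (x - b) * s)) / h - s) with 0 by (field; auto).
  rewrite Rabs_R0; lra. Qed.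

Lemma deriv_local f g x l eps : eps > 0 -> (forall y, Rabs (y - x) < eps -> f y = g y) ->
  derivable_pt_lim g x l -> derivable_pt_lim f x l.
Proof. intros He Hfg Hg e He'. destruct (Hg e He') as [d Hd].
  assert (0 < Rmin d eps) by (apply Rmin_glb_lt; [apply cond_pos| lra]).
  exists (mkposreal _ H). intros h Hh0 Hh. simpl in Hh.
  rewrite !Hfg. apply Hd; auto. eapply Rlt_le_trans; [apply Hh| apply Rmin_l].
  rewrite Rminus_diag, Rabs_R0; lra.
  replace (x + h - x) with h by ring. eapply Rlt_le_trans; [apply Hh| apply Rmin_r]. Qed.

Lemma small_zero a : (forall e, e > 0 -> Rabs a < e) -> a = 0.
Proof. intros H. destruct (Req_dec a 0); auto. assert (Rabs a > 0) by (apply Rabs_pos_lt; auto).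
  specialize (H _ H1). lra. Qed.

Lemma deriv_left f x l s eps : eps > 0 -> (forall h, -eps < h < 0 -> f (x + h) = f x + s * h) ->
  derivable_pt_lim f x l -> l = s.
Proof. intros He Hf Hd. apply Rminus_diag_uniq. apply small_zero. intros e He'.
  destruct (Hd e He') as [d Hdd]. set (h := - Rmin (d/2) (eps/2)).
  assert (0 < Rmin (d/2) (eps/2)) by (apply Rmin_glb_lt; pose proof (cond_pos d); lra).
  assert (Rmin (d/2) (eps/2) <= d/2) by apply Rmin_l. assert (Rmin (d/2) (eps/2) <= eps/2) by apply Rmin_r.
  pose proof (cond_pos d).
  assert (h <> 0) by (unfold h; lra). assert (Rabs h < d) by (unfold h; rewrite Rabs_Ropp, Rabs_pos_eq; lra).
  specialize (Hdd h H3 H4). rewrite Hf in Hdd by (unfold h; lra).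
  replace ((f x + s * h - f x) / h - l) with (s - l) in Hdd by (field; auto).
  rewrite Rabs_minus_sym. auto. Qed.

Lemma deriv_right f x l s eps : eps > 0 -> (forall h, 0 < h < eps -> f (x + h) = f x + s * h) ->
  derivable_pt_lim f x l -> l = s.
Proof. intros He Hf Hd. apply Rminus_diag_uniq. apply small_zero. intros e He'.
  destruct (Hd e He') as [d Hdd]. set (h := Rmin (d/2) (eps/2)).
  assert (0 < Rmin (d/2) (eps/2)) by (apply Rmin_glb_lt; pose proof (cond_pos d); lra).
  assert (Rmin (d/2) (eps/2) <= d/2) by apply Rmin_l. assert (Rmin (d/2) (eps/2) <= eps/2) by apply Rmin_r.
  pose proof (cond_pos d).
  assert (h <> 0) by (unfold h; lra). assert (Rabs h < d) by (unfold h; rewrite Rabs_pos_eq; lra).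
  specialize (Hdd h H3 H4). rewrite Hf in Hdd by (unfold h; lra).
  replace ((f x + s * h - f x) / h - l) with (s - l) in Hdd by (field; auto).
  rewrite Rabs_minus_sym. auto. Qed.

Lemma P_deriv_open n St lo hi (G : good n St lo hi) m i t : Tg n St m < t < Tg n St (S m) ->
  derivable_pt_lim (Pgen n St lo hi i) t (val (lo m) (hi m) i).
Proof. intros Ht. apply (deriv_local _ (fun x => St m i + (x - Tg n St m) * val (lo m) (hi m) i) _ _
   (Rmin (t - Tg n St m) (Tg n St (S m) - t))).
  - apply Rmin_glb_lt; lra.
  - intros y Hy. apply (P_in_piece _ _ _ _ G).
    pose proof (Rmin_l (t - Tg n St m) (Tg n St (S m) - t)). pose proof (Rmin_r (t - Tg n St m) (Tg n St (S m) - t)).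
    apply Rabs_def2 in Hy. lra.
  - apply deriv_affine. Qed.

Lemma ind_val_ne a b a' b' i : ind a b i <> ind a' b' i -> val a b i <> val a' b' i.
Proof. intros H. destruct (ind a b i) eqn:E1; destruct (ind a' b' i) eqn:E2; try congruence.
  - pose proof (val_pos _ _ _ E1). unfold val at 2. rewrite E2. lra.
  - pose proof (val_pos _ _ _ E2). unfold val at 1. rewrite E1. lra. Qed.

Lemma P_nondiff_break n St lo hi (G : good n St lo hi) m : ~ diff_at n (Pgen n St lo hi) (Tg n St (S m)).
Proof. intros Hd. destruct (g_diff _ _ _ _ G m) as [i [Hi Hne]]. destruct (Hd i Hi) as [l Hl].
  pose proof (T_incr _ _ _ _ G m). pose proof (T_incr _ _ _ _ G (S m)).
  assert (l = val (lo m) (hi m) i).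
  { apply (deriv_left (Pgen n St lo hi i) (Tg n St (S m)) l (val (lo m) (hi m) i) (Tg n St (S m) - Tg n St m)); [lra| |auto].
    intros h Hh. rewrite (P_left _ _ _ _ G m) by (auto; lra). rewrite P_at_T by auto. ring. }
  assert (l = val (lo (S m)) (hi (S m)) i).
  { apply (deriv_right (Pgen n St lo hi i) (Tg n St (S m)) l (val (lo (S m)) (hi (S m)) i) (Tg n St (S (S m)) - Tg n St (S m))); [lra| |auto].
    intros h Hh. rewrite (P_in_piece _ _ _ _ G (S m)) by lra. rewrite P_at_T by auto. ring. }
  apply (ind_val_ne _ _ _ _ _ Hne). congruence. Qed.

Lemma P_not_break_diff n St lo hi (G : good n St lo hi) t : 1 <= t ->
  (forall m, t <> Tg n St m) -> diff_at n (Pgen n St lo hi) t.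
Proof. intros Ht Hb j Hj. pose proof (idx_spec _ _ _ _ G t Ht) as H. set (m := idx n St t) in *.
  exists (val (lo m) (hi m) j). apply (P_deriv_open _ _ _ _ G). destruct H as [H1 H2]. split; auto.
  destruct H1; auto. exfalso; apply (Hb m); auto. Qed.

Lemma P_cont_pl n St lo hi (G : good n St lo hi) : cont_pl n 1 (Pgen n St lo hi).
Proof. split; [|split].
  - intros j Hj q Hq eps He. exists eps. split; auto. intros x Hx Hxq.
    destruct (Rle_dec x q).
    + pose proof (P_lip _ _ _ _ G j x q Hj ltac:(lra)). rewrite Rabs_minus_sym in Hxq |- *.
      rewrite Rabs_pos_eq in * by lra. lra.
    + pose proof (P_lip _ _ _ _ G j q x Hj ltac:(lra)).
      rewrite Rabs_pos_eq in * by lra. lra.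
  - intros q Hq. exists 1. split; [lra|]. destruct (g_unb _ _ _ _ G (q + 1)) as [K HK].
    exists (map (Tg n St) (seq 0 K)). intros r Hr Hrq. apply in_map_iff.
    assert (exists m, r = Tg n St m) as [m Hm].
    { destruct Hr as [Hr|[Hr Hnd]]. exists 0%nat. rewrite (g_T0 _ _ _ _ G). auto.
      apply NNPP. intros Hne. apply Hnd. apply (P_not_break_diff _ _ _ _ G); [lra|].
      intros m Hm. apply Hne. exists m; auto. }
    exists m. split; auto. apply in_seq. split; [lia|]. simpl.
    destruct (Nat.lt_ge_cases m K); auto. pose proof (T_mono _ _ _ _ G K m H).
    apply Rabs_def2 in Hrq. lra.
  - intros q Hq Hnd. assert (q <> 1 /\ diff_at n (Pgen n St lo hi) q) as [Hq1 Hd].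
    { split. intros E. apply Hnd. left; auto. apply NNPP. intros Hnd'. apply Hnd. right. split; auto.
      destruct Hq; auto. exfalso. apply Hnd. left; auto. }
    pose proof (idx_spec _ _ _ _ G q ltac:(lra)) as Hs. set (m := idx n St q) in *.
    assert (Tg n St m < q).
    { destruct Hs as [[h|h] _]; auto. exfalso. destruct m. rewrite (g_T0 _ _ _ _ G) in h. auto.
      apply (P_nondiff_break _ _ _ _ G m). rewrite h. auto. }
    exists (Rmin (q - Tg n St m) (Tg n St (S m) - q)). split. apply Rmin_glb_lt; lra.
    intros x Hx Hx1 Hxn j Hj l1 l2 D1 D2.
    pose proof (Rmin_l (q - Tg n St m) (Tg n St (S m) - q)). pose proof (Rmin_r (q - Tg n St m) (Tg n St (S m) - q)).
    apply Rabs_def2 in Hx.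
    pose proof (P_deriv_open _ _ _ _ G m j q ltac:(lra)).
    pose proof (P_deriv_open _ _ _ _ G m j x ltac:(lra)).
    rewrite (uniqueness_limite _ _ _ _ D1 H2). rewrite (uniqueness_limite _ _ _ _ D2 H3). auto.
Qed.

Lemma val_ind_eq a b a' b' i : val a b i = val a' b' i -> ind a b i = ind a' b' i.
Proof. intros H. destruct (bool_dec (ind a b i) (ind a' b' i)); auto. exfalso. apply (ind_val_ne _ _ _ _ _ n H). Qed.

Lemma pattern_det n a b a' b' : (1 <= a <= b)%nat -> (b <= n)%nat -> (1 <= a' <= b')%nat -> (b' <= n)%nat ->
  (forall i, (1 <= i <= n)%nat -> val a b i = val a' b' i) -> a = a' /\ b = b'.
Proof. intros. assert (Hi : forall i, (1 <= i <= n)%nat -> ind a b i = ind a' b' i) by (intros; apply val_ind_eq; auto).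
  pose proof (Hi a ltac:(lia)) as K1. pose proof (Hi a' ltac:(lia)) as K2. pose proof (Hi b ltac:(lia)) as K3. pose proof (Hi b' ltac:(lia)) as K4.
  assert (J1 : ind a b a = true) by (apply ind_true; lia). assert (J2 : ind a' b' a' = true) by (apply ind_true; lia).
  assert (J3 : ind a b b = true) by (apply ind_true; lia). assert (J4 : ind a' b' b' = true) by (apply ind_true; lia).
  rewrite J1 in K1. rewrite J2 in K2. rewrite J3 in K3. rewrite J4 in K4.
  symmetry in K1, K3. apply ind_true in K1, K2, K3, K4. lia. Qed.

Lemma slopes_det n St lo hi (G : good n St lo hi) c d rlo rhi m x :
  slopes_on n (Pgen n St lo hi) c d rlo rhi -> c < x < d -> Tg n St m < x < Tg n St (S m) ->
  rlo = lo m /\ rhi = hi m.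
Proof. intros [h1 [h2 [h3 Hd]]] Hx Hm. destruct (g_lohi _ _ _ _ G m).
  apply (pattern_det n); auto; try lia. intros i Hi.
  specialize (Hd x Hx i Hi). fold (ind rlo rhi i) in Hd. fold (val rlo rhi i) in Hd.
  apply (uniqueness_limite _ _ _ _ Hd). apply (P_deriv_open _ _ _ _ G). auto. Qed.

Lemma P_G2 n St lo hi (G : good n St lo hi) c d : 1 <= c -> c < d ->
  (forall x, c < x < d -> diff_at n (Pgen n St lo hi) x) ->
  exists rlo rhi, G2_pattern n (Pgen n St lo hi) c d rlo rhi.
Proof. intros Hc Hcd Hdf. pose proof (idx_spec _ _ _ _ G ((c+d)/2) ltac:(lra)) as Hs.
  set (m := idx n St ((c + d)/2)) in *.
  assert (Tg n St m <= c).
  { destruct (Rle_dec (Tg n St m) c) as [h|h]; auto. exfalso. destruct m as [|m'].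
    rewrite (g_T0 _ _ _ _ G) in h. lra. apply (P_nondiff_break _ _ _ _ G m'). apply Hdf. lra. }
  assert (d <= Tg n St (S m)).
  { destruct (Rle_dec d (Tg n St (S m))) as [h|h]; auto. exfalso.
    apply (P_nondiff_break _ _ _ _ G m). apply Hdf. lra. }
  destruct (g_lohi _ _ _ _ G m) as [[Hl1 Hl2] Hl3].
  exists (lo m), (hi m). split; [lia|split; [lia|split; [lia|split]]].
  - intros j Hj x Hx. rewrite !(P_in_piece _ _ _ _ G m) by lra.
    assert (ind (lo m) (hi m) j = true) by (apply ind_true; lia).
    assert (ind (lo m) (hi m) (lo m) = true) by (apply ind_true; lia).
    split. rewrite (g_grp _ _ _ _ G m j Hj). unfold val. rewrite H1, H2. auto.
    replace (1 / INR (hi m - lo m + 1)) with (val (lo m) (hi m) j) by (unfold val; rewrite H1; auto).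
    apply (P_deriv_open _ _ _ _ G). lra.
  - intros j Hj Hnj x y Hx Hy. rewrite !(P_in_piece _ _ _ _ G m) by lra.
    assert (ind (lo m) (hi m) j = false) by (apply ind_false; auto). unfold val; rewrite H1. ring.
Qed.

Lemma P_G3 n St lo hi (G : good n St lo hi) q : q > 1 ->
  forall rlo rhi slo shi,
       left_slopes n (Pgen n St lo hi) q rlo rhi -> right_slopes n (Pgen n St lo hi) q slo shi ->
       (rlo < shi)%nat ->
       forall j, (rlo <= j <= shi)%nat -> Pgen n St lo hi j q = Pgen n St lo hi rlo q.
Proof. intros Hq rlo rhi slo shi [e1 [He1 Hl]] [e2 [He2 Hr]] Hlt j Hj.
  pose proof (idx_spec _ _ _ _ G q ltac:(lra)) as Hs. set (m := idx n St q) in *.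
  assert (Hright : slo = lo m /\ shi = hi m).
  { set (x := q + Rmin e2 (Tg n St (S m) - q) / 2).
    pose proof (Rmin_l e2 (Tg n St (S m) - q)). pose proof (Rmin_r e2 (Tg n St (S m) - q)).
    assert (0 < Rmin e2 (Tg n St (S m) - q)) by (apply Rmin_glb_lt; lra).
    apply (slopes_det _ _ _ _ G q (q + e2) slo shi m x Hr); unfold x; lra. }
  destruct Hs as [[Hm|Hm] Hm2].
  - assert (Hleft : rlo = lo m /\ rhi = hi m).
    { set (x := q - Rmin e1 (q - Tg n St m) / 2).
      pose proof (Rmin_l e1 (q - Tg n St m)). pose proof (Rmin_r e1 (q - Tg n St m)).
      assert (0 < Rmin e1 (q - Tg n St m)) by (apply Rmin_glb_lt; lra).
      apply (slopes_det _ _ _ _ G (q - e1) q rlo rhi m x Hl); unfold x; lra. }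
    destruct Hleft as [-> _]. destruct Hright as [_ ->].
    rewrite !(P_in_piece _ _ _ _ G m) by lra. destruct (g_lohi _ _ _ _ G m).
    assert (ind (lo m) (hi m) j = true) by (apply ind_true; lia).
    assert (ind (lo m) (hi m) (lo m) = true) by (apply ind_true; lia).
    rewrite (g_grp _ _ _ _ G m j Hj). unfold val. rewrite H1, H2. auto.
  - destruct m as [|m'] eqn:Em. rewrite (g_T0 _ _ _ _ G) in Hm. lra.
    pose proof (T_incr _ _ _ _ G m').
    assert (Hleft : rlo = lo m' /\ rhi = hi m').
    { set (x := q - Rmin e1 (q - Tg n St m') / 2).
      pose proof (Rmin_l e1 (q - Tg n St m')). pose proof (Rmin_r e1 (q - Tg n St m')).
      assert (0 < Rmin e1 (q - Tg n St m')) by (apply Rmin_glb_lt; lra).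
      apply (slopes_det _ _ _ _ G (q - e1) q rlo rhi m' x Hl); unfold x; lra. }
    destruct Hleft as [-> _]. destruct Hright as [_ ->].
    rewrite <- Hm. rewrite !(P_at_T _ _ _ _ G). apply (g_G3 _ _ _ _ G); auto.
Qed.

Theorem P_gen n St lo hi (G : good n St lo hi) : gen_n_system n 1 (Pgen n St lo hi).
Proof. split; [apply P_cont_pl; auto|split; [|split]].
  - intros q Hq. apply P_G1; auto. lra.
  - intros c d Hc Hcd Hdf. apply P_G2; auto.
  - intros q Hq _ rlo rhi slo shi Hl Hr Hlt j Hj. eapply P_G3; eauto.
Qed.

Definition wt n i := INR i / (INR n * INR n).
Definition dl k := / (INR k + 2).
Definition xp n (X : nat -> nat -> R) k i := X k i + dl k * wt n i.
Definition zz n X k i := 2 * xp n X k i / xp n X k 1%nat.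
Fixpoint cc n X k := match k with O => / INR n | S k' => cc n X k' * zz n X k' n end.
Definition yy n X k i := cc n X k * zz n X k i.
Definition NN n := (2 * n - 1)%nat.
Definition cyc n m := (m / NN n)%nat.
Definition ph n m := (m mod NN n)%nat.
Definition lev n X k r := if Nat.eqb r 0 then cc n X k else yy n X k r.
Definition Stc n X m i :=
  if Nat.ltb (ph n m) n then Rmin (yy n X (cyc n m) i) (lev n X (cyc n m) (ph n m))
  else Rmax (yy n X (cyc n m) i) (yy n X (cyc n m) (ph n m - n + 1)).
Definition loc n m := if Nat.ltb (ph n m) n then (ph n m + 1)%nat else 1%nat.
Definition hic n m := if Nat.ltb (ph n m) n then n else (ph n m - n + 1)%nat.

Definition Xok n (X : nat -> nat -> R) := forall k, in_Delta_bar n (X k).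

Lemma chain_lt f n i i' : (forall i, (1 <= i < n)%nat -> f i < f (S i)) -> (1 <= i < i')%nat -> (i' <= n)%nat -> f i < f i'.
Proof. intros H Hi. induction i' as [|i' IH]; intros Hn; [lia|].
  destruct (Nat.eq_dec i i'). subst. apply H; lia. apply Rlt_trans with (f i'). apply IH; lia. apply H; lia. Qed.

Lemma chain_le f n i i' : (forall i, (1 <= i < n)%nat -> f i <= f (S i)) -> (1 <= i <= i')%nat -> (i' <= n)%nat -> f i <= f i'.
Proof. intros H Hi. induction i' as [|i' IH]; intros Hn; [lia|].
  destruct (Nat.eq_dec i (S i')). subst. lra. apply Rle_trans with (f i'). apply IH; lia. apply H; lia. Qed.


Lemma X_nonneg n X (HX : Xok n X) k i : (1 <= i <= n)%nat -> 0 <= X k i.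
Proof. intros Hi. destruct (HX k) as [h0 [hs _]]. apply Rle_trans with (X k 1%nat); auto.
  apply (chain_le (X k) n); auto; lia. Qed.

Lemma wt_pos n i : (2 <= n)%nat -> (1 <= i)%nat -> 0 < wt n i.
Proof. intros. unfold wt. assert (0 < INR n) by (apply INR_pos; lia). assert (0 < INR i) by (apply INR_pos; lia).
  apply Rdiv_lt_0_compat; nra. Qed.

Lemma dl_pos k : 0 < dl k.
Proof. unfold dl. apply Rinv_0_lt_compat. pose proof (pos_INR k). lra. Qed.

Lemma dl_le k : dl k <= / (INR k + 1).
Proof. unfold dl. pose proof (pos_INR k). apply Rinv_le_contravar; lra. Qed.

Lemma xp_incr n X (HX : Xok n X) (hn : (2 <= n)%nat) k i : (1 <= i < n)%nat -> xp n X k i < xp n X k (S i).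
Proof. intros Hi. unfold xp. destruct (HX k) as [_ [hs _]]. pose proof (hs i Hi).
  assert (wt n i < wt n (S i)). { unfold wt. rewrite S_INR. assert (0 < INR n) by (apply INR_pos; lia).
    unfold Rdiv. apply Rmult_lt_compat_r. apply Rinv_0_lt_compat; nra. lra. }
  pose proof (dl_pos k). nra. Qed.

Lemma xp1_pos n X (HX : Xok n X) (hn : (2 <= n)%nat) k : 0 < xp n X k 1%nat.
Proof. unfold xp. destruct (HX k) as [h0 _]. pose proof (wt_pos n 1 hn (le_n _)). pose proof (dl_pos k). nra. Qed.

Lemma zz_incr n X (HX : Xok n X) (hn : (2 <= n)%nat) k i : (1 <= i < n)%nat -> zz n X k i < zz n X k (S i).
Proof. intros. unfold zz. pose proof (xp1_pos n X HX hn k). pose proof (xp_incr n X HX hn k i H).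
  unfold Rdiv. apply Rmult_lt_compat_r. apply Rinv_0_lt_compat; auto. lra. Qed.

Lemma zz1 n X (HX : Xok n X) (hn : (2 <= n)%nat) k : zz n X k 1%nat = 2.
Proof. unfold zz. pose proof (xp1_pos n X HX hn k). field. lra. Qed.

Lemma zzn_ge n X (HX : Xok n X) (hn : (2 <= n)%nat) k : 2 < zz n X k n.
Proof. rewrite <- (zz1 n X HX hn k). apply (chain_lt (zz n X k) n); auto; try lia. apply zz_incr; auto. Qed.

Lemma cc_pos n X (HX : Xok n X) (hn : (2 <= n)%nat) k : 0 < cc n X k.
Proof. induction k; simpl. apply Rinv_0_lt_compat, INR_pos; lia. pose proof (zzn_ge n X HX hn k). nra. Qed.

Lemma cc_S n X (HX : Xok n X) (hn : (2 <= n)%nat) k : 2 * cc n X k <= cc n X (S k).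
Proof. simpl. pose proof (zzn_ge n X HX hn k). pose proof (cc_pos n X HX hn k). nra. Qed.

Lemma cc_grow n X (HX : Xok n X) (hn : (2 <= n)%nat) k : (INR k + 1) / INR n <= cc n X k.
Proof. assert (0 < INR n) by (apply INR_pos; lia). induction k.
  - simpl. unfold Rdiv. lra.
  - pose proof (cc_S n X HX hn k). rewrite S_INR.
    assert (1 / INR n <= cc n X k). { apply Rle_trans with ((INR k + 1) / INR n); auto.
      unfold Rdiv. apply Rmult_le_compat_r. left; apply Rinv_0_lt_compat; auto. pose proof (pos_INR k); lra. }
    unfold Rdiv in *. lra. Qed.

Lemma yy_incr n X (HX : Xok n X) (hn : (2 <= n)%nat) k i : (1 <= i < n)%nat -> yy n X k i < yy n X k (S i).
Proof. intros. unfold yy. pose proof (cc_pos n X HX hn k). pose proof (zz_incr n X HX hn k i H). nra. Qed.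

Lemma yy_lt n X (HX : Xok n X) (hn : (2 <= n)%nat) k i i' : (1 <= i < i')%nat -> (i' <= n)%nat -> yy n X k i < yy n X k i'.
Proof. intros. apply (chain_lt _ n); auto. apply yy_incr; auto. Qed.

Lemma yy_le n X (HX : Xok n X) (hn : (2 <= n)%nat) k i i' : (1 <= i <= i')%nat -> (i' <= n)%nat -> yy n X k i <= yy n X k i'.
Proof. intros. destruct (Nat.eq_dec i i'). subst; lra. left. apply yy_lt; auto; lia. Qed.

Lemma yy1 n X (HX : Xok n X) (hn : (2 <= n)%nat) k : yy n X k 1%nat = 2 * cc n X k.
Proof. unfold yy. rewrite zz1; auto. ring. Qed.

Lemma yy_gt_cc n X (HX : Xok n X) (hn : (2 <= n)%nat) k i : (1 <= i <= n)%nat -> cc n X k < yy n X k i.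
Proof. intros. pose proof (cc_pos n X HX hn k). pose proof (yy1 n X HX hn k).
  assert (yy n X k 1%nat <= yy n X k i) by (apply yy_le; auto; lia). lra. Qed.

Lemma cc_Sy n X k : cc n X (S k) = yy n X k n.
Proof. reflexivity. Qed.

Lemma NN_pos n : (2 <= n)%nat -> (NN n <> 0)%nat.
Proof. unfold NN. lia. Qed.

Lemma ph_lt n m : (2 <= n)%nat -> (ph n m < NN n)%nat.
Proof. intros. apply Nat.mod_upper_bound, NN_pos; auto. Qed.

Lemma cycph_eq n m : m = (NN n * cyc n m + ph n m)%nat.
Proof. apply Nat.div_mod_eq. Qed.

Lemma cycph_char n m k r : (2 <= n)%nat -> (r < NN n)%nat -> m = (NN n * k + r)%nat -> cyc n m = k /\ ph n m = r.
Proof. intros hn Hr Hm. split. symmetry. eapply Nat.div_unique; eauto. symmetry. eapply Nat.mod_unique; eauto. Qed.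

Lemma cycph_S1 n m : (2 <= n)%nat -> (S (ph n m) < NN n)%nat -> cyc n (S m) = cyc n m /\ ph n (S m) = S (ph n m).
Proof. intros. apply cycph_char; auto. pose proof (cycph_eq n m). lia. Qed.

Lemma cycph_S2 n m : (2 <= n)%nat -> (S (ph n m) = NN n)%nat -> cyc n (S m) = S (cyc n m) /\ ph n (S m) = 0%nat.
Proof. intros. apply cycph_char; auto. unfold NN in *; lia. pose proof (cycph_eq n m). lia. Qed.

Lemma cycph_start n k : (2 <= n)%nat -> cyc n (NN n * k) = k /\ ph n (NN n * k) = 0%nat.
Proof. intros. apply cycph_char; auto. unfold NN; lia. Qed.

Lemma Stc_fwd n X m i : (ph n m < n)%nat -> Stc n X m i = Rmin (yy n X (cyc n m) i) (lev n X (cyc n m) (ph n m)).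
Proof. intros. unfold Stc. replace (Nat.ltb (ph n m) n) with true by (symmetry; apply Nat.ltb_lt; auto). auto. Qed.
Lemma Stc_ret n X m i : (n <= ph n m)%nat -> Stc n X m i = Rmax (yy n X (cyc n m) i) (yy n X (cyc n m) (ph n m - n + 1)).
Proof. intros. unfold Stc. replace (Nat.ltb (ph n m) n) with false by (symmetry; apply Nat.ltb_ge; auto). auto. Qed.
Lemma lohi_fwd n m : (ph n m < n)%nat -> loc n m = (ph n m + 1)%nat /\ hic n m = n.
Proof. intros. unfold loc, hic. replace (Nat.ltb (ph n m) n) with true by (symmetry; apply Nat.ltb_lt; auto). auto. Qed.
Lemma lohi_ret n m : (n <= ph n m)%nat -> loc n m = 1%nat /\ hic n m = (ph n m - n + 1)%nat.
Proof. intros. unfold loc, hic. replace (Nat.ltb (ph n m) n) with false by (symmetry; apply Nat.ltb_ge; auto). auto. Qed.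

Lemma lev_lt n X (HX : Xok n X) (hn : (2 <= n)%nat) k r i : (r < i <= n)%nat -> lev n X k r < yy n X k i.
Proof. intros. unfold lev. destruct (Nat.eqb_spec r 0). apply yy_gt_cc; auto; lia. apply yy_lt; auto; lia. Qed.
Lemma lev_ge n X (HX : Xok n X) (hn : (2 <= n)%nat) k r i : (1 <= i <= r)%nat -> (r <= n)%nat -> yy n X k i <= lev n X k r.
Proof. intros. unfold lev. destruct (Nat.eqb_spec r 0). lia. apply yy_le; auto; lia. Qed.
Lemma lev_S n X k r : lev n X k (S r) = yy n X k (S r).
Proof. reflexivity. Qed.
Lemma lev_pos n X (HX : Xok n X) (hn : (2 <= n)%nat) k r : (r <= n)%nat -> 0 < lev n X k r.
Proof. intros. unfold lev. pose proof (cc_pos n X HX hn k). destruct (Nat.eqb_spec r 0). auto.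
  pose proof (yy_gt_cc n X HX hn k r ltac:(lia)). lra. Qed.

Lemma trans_cases n m : (2 <= n)%nat ->
  (S (ph n m) < n /\ cyc n (S m) = cyc n m /\ ph n (S m) = S (ph n m))%nat \/
  (S (ph n m) = n /\ cyc n (S m) = cyc n m /\ ph n (S m) = n)%nat \/
  (n <= ph n m /\ S (ph n m) < NN n /\ cyc n (S m) = cyc n m /\ ph n (S m) = S (ph n m))%nat \/
  (S (ph n m) = NN n /\ cyc n (S m) = S (cyc n m) /\ ph n (S m) = 0)%nat.
Proof. intros hn. pose proof (ph_lt n m hn). destruct (Nat.eq_dec (S (ph n m)) (NN n)).
  - right; right; right. split; auto. apply cycph_S2; auto.
  - destruct (cycph_S1 n m hn ltac:(lia)) as [h1 h2].
    destruct (Nat.lt_ge_cases (S (ph n m)) n). left; auto.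
    destruct (Nat.eq_dec (S (ph n m)) n). right; left; rewrite h2; auto.
    right; right; left. unfold NN in *. repeat split; auto; lia. Qed.

Lemma min_l' a b : a <= b -> Rmin a b = a. Proof. apply Rmin_left. Qed.
Lemma min_r' a b : b <= a -> Rmin a b = b. Proof. apply Rmin_right. Qed.
Lemma max_l' a b : b <= a -> Rmax a b = a. Proof. apply Rmax_left. Qed.
Lemma max_r' a b : a <= b -> Rmax a b = b. Proof. apply Rmax_right. Qed.

Lemma good_c n X (HX : Xok n X) (hn : (2 <= n)%nat) : good n (Stc n X) (loc n) (hic n).
Proof. pose proof (ph_lt n) as Hph. assert (NNe : NN n = (2 * n - 1)%nat) by reflexivity.
  split.
  - intros m. destruct (Nat.lt_ge_cases (ph n m) n).
    + destruct (lohi_fwd n m H) as [-> ->]. lia.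
    + destruct (lohi_ret n m H) as [-> ->]. specialize (Hph m hn). lia.
  - unfold Tg. destruct (cycph_start n 0 hn) as [h1 h2]. replace (NN n * 0)%nat with 0%nat in * by lia.
    rewrite (psum_ext _ (fun _ => / INR n)).
    + assert (forall j, psum (fun _ => / INR n) j = INR j * / INR n) by (induction j; cbn [psum]; [simpl; lra|rewrite IHj, S_INR; lra]).
      rewrite H. field. apply Rgt_not_eq, INR_pos; lia.
    + intros i Hi. rewrite Stc_fwd by lia. rewrite h1, h2. unfold lev; simpl.
      apply min_r'. pose proof (yy_gt_cc n X HX hn 0 i Hi). simpl in H. lra.
  - intros m. set (k := cyc n m) in *. set (r := ph n m) in *.
    destruct (trans_cases n m hn) as [[c1 [c2 c3]]|[[c1 [c2 c3]]|[[c1 [c2 [c3 c4]]]|[c1 [c2 c3]]]]].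
    + exists (yy n X k (S r) - lev n X k r). split. pose proof (lev_lt n X HX hn k r (S r) ltac:(lia)). lra.
      intros i Hi. rewrite !Stc_fwd by lia. rewrite c2, c3. fold k r. rewrite lev_S.
      destruct (lohi_fwd n m ltac:(lia)) as [-> ->]. fold r. unfold indR.
      destruct (ind (r+1) n i) eqn:E.
      * apply ind_true in E. rewrite min_r' by (apply yy_le; auto; lia).
        rewrite min_r'. ring. pose proof (lev_lt n X HX hn k r i ltac:(lia)). lra.
      * apply ind_false in E. rewrite min_l' by (apply yy_le; auto; lia).
        rewrite min_l' by (apply lev_ge; auto; lia). ring.
    + exists (yy n X k n - yy n X k (n - 1)). split. pose proof (yy_lt n X HX hn k (n-1) n ltac:(lia) ltac:(lia)). lra.
      intros i Hi. rewrite Stc_ret by lia. rewrite Stc_fwd by lia. rewrite c2, c3. fold k r.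
      replace (n - n + 1)%nat with 1%nat by lia.
      destruct (lohi_fwd n m ltac:(lia)) as [-> ->]. fold r. replace (r + 1)%nat with n by lia.
      unfold lev. replace (Nat.eqb r 0) with false by (symmetry; apply Nat.eqb_neq; lia).
      replace r with (n - 1)%nat by lia.
      rewrite max_l' by (apply yy_le; auto; lia). unfold indR.
      destruct (ind n n i) eqn:E.
      * apply ind_true in E. replace i with n by lia. rewrite min_r' by (apply yy_le; auto; lia). ring.
      * apply ind_false in E. rewrite min_l' by (apply yy_le; auto; lia). ring.
    + exists (yy n X k (r - n + 2) - yy n X k (r - n + 1)).
      split. pose proof (yy_lt n X HX hn k (r-n+1) (r-n+2) ltac:(lia) ltac:(lia)). lra.
      intros i Hi. rewrite !Stc_ret by lia. rewrite c3, c4. fold k r.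
      replace (S r - n + 1)%nat with (r - n + 2)%nat by lia.
      destruct (lohi_ret n m ltac:(lia)) as [-> ->]. fold r. unfold indR.
      destruct (ind 1 (r - n + 1) i) eqn:E.
      * apply ind_true in E. rewrite max_r' by (apply yy_le; auto; lia).
        rewrite max_r' by (apply yy_le; auto; lia). ring.
      * apply ind_false in E. rewrite max_l' by (apply yy_le; auto; lia).
        rewrite max_l' by (apply yy_le; auto; lia). ring.
    + exists (yy n X k n - yy n X k (n - 1)). split. pose proof (yy_lt n X HX hn k (n-1) n ltac:(lia) ltac:(lia)). lra.
      intros i Hi. rewrite (Stc_ret n X m) by lia. rewrite (Stc_fwd n X (S m)) by lia. rewrite c2, c3. fold k r.
      unfold lev; simpl Nat.eqb. cbv iota. rewrite cc_Sy.
      rewrite min_r' by (left; rewrite <- cc_Sy; apply yy_gt_cc; auto).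
      destruct (lohi_ret n m ltac:(lia)) as [-> ->]. fold r. replace (r - n + 1)%nat with (n - 1)%nat by lia.
      unfold indR. destruct (ind 1 (n - 1) i) eqn:E.
      * apply ind_true in E. rewrite max_r' by (apply yy_le; auto; lia). ring.
      * apply ind_false in E. replace i with n by lia. rewrite max_l' by (apply yy_le; auto; lia). ring.
  - intros m. split.
    + destruct (Nat.lt_ge_cases (ph n m) n).
      * rewrite Stc_fwd by auto. pose proof (lev_pos n X HX hn (cyc n m) (ph n m) ltac:(lia)).
        pose proof (yy_gt_cc n X HX hn (cyc n m) 1 ltac:(lia)). pose proof (cc_pos n X HX hn (cyc n m)).
        unfold Rmin; destruct (Rle_dec _ _); lra.
      * rewrite Stc_ret by auto. pose proof (yy_gt_cc n X HX hn (cyc n m) 1 ltac:(lia)). pose proof (cc_pos n X HX hn (cyc n m)).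
        unfold Rmax; destruct (Rle_dec _ _); lra.
    + intros i Hi. pose proof (yy_le n X HX hn (cyc n m) i (S i) ltac:(lia) ltac:(lia)).
      destruct (Nat.lt_ge_cases (ph n m) n).
      * rewrite !Stc_fwd by auto. unfold Rmin; destruct (Rle_dec _ _); destruct (Rle_dec _ _); lra.
      * rewrite !Stc_ret by auto. unfold Rmax; destruct (Rle_dec _ _); destruct (Rle_dec _ _); lra.
  - intros m i. specialize (Hph m hn). destruct (Nat.lt_ge_cases (ph n m) n).
    + destruct (lohi_fwd n m H) as [-> ->]. intros Hi. rewrite !Stc_fwd by auto.
      rewrite !min_r'; auto. left; apply lev_lt; auto; lia. left; apply lev_lt; auto; lia.
    + destruct (lohi_ret n m H) as [-> ->]. intros Hi. rewrite !Stc_ret by auto.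
      rewrite !max_r'; auto; apply yy_le; auto; lia.
  - intros m. set (k := cyc n m) in *. set (r := ph n m) in *.
    destruct (trans_cases n m hn) as [[c1 [c2 c3]]|[[c1 [c2 c3]]|[[c1 [c2 [c3 c4]]]|[c1 [c2 c3]]]]].
    + destruct (lohi_fwd n m ltac:(lia)) as [-> _]. destruct (lohi_fwd n (S m) ltac:(lia)) as [_ ->].
      fold r. intros Hlt i Hi. rewrite !Stc_fwd by lia. rewrite c2, c3. fold k. rewrite lev_S.
      rewrite !min_r' by (apply yy_le; auto; lia). auto.
    + destruct (lohi_fwd n m ltac:(lia)) as [-> _]. destruct (lohi_ret n (S m) ltac:(lia)) as [_ ->].
      rewrite c3. fold r. lia.
    + destruct (lohi_ret n m ltac:(lia)) as [-> _]. destruct (lohi_ret n (S m) ltac:(lia)) as [_ ->].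
      rewrite c4. fold r. intros Hlt i Hi. rewrite !Stc_ret by lia. rewrite c3, c4. fold k.
      rewrite !max_r' by (apply yy_le; auto; lia). auto.
    + destruct (lohi_ret n m ltac:(lia)) as [-> _]. destruct (lohi_fwd n (S m) ltac:(lia)) as [_ ->].
      intros Hlt i Hi. rewrite !Stc_fwd by lia. rewrite c2, c3.
      unfold lev; simpl Nat.eqb. cbv iota.
      rewrite !min_r' by (left; apply yy_gt_cc; auto; lia). auto.
  - intros m. set (r := ph n m) in *.
    destruct (trans_cases n m hn) as [[c1 [c2 c3]]|[[c1 [c2 c3]]|[[c1 [c2 [c3 c4]]]|[c1 [c2 c3]]]]].
    + destruct (lohi_fwd n m ltac:(lia)) as [-> ->]. destruct (lohi_fwd n (S m) ltac:(lia)) as [-> ->].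
      exists (r + 1)%nat. split. lia. rewrite c3. fold r.
      replace (ind (r+1) n (r+1)) with true by (symmetry; apply ind_true; lia).
      replace (ind (S r + 1) n (r+1)) with false by (symmetry; apply ind_false; lia). congruence.
    + destruct (lohi_fwd n m ltac:(lia)) as [-> ->]. destruct (lohi_ret n (S m) ltac:(lia)) as [-> ->].
      exists n. split. lia. rewrite c3. fold r.
      replace (ind (r+1) n n) with true by (symmetry; apply ind_true; lia).
      replace (ind 1 (n - n + 1) n) with false by (symmetry; apply ind_false; lia). congruence.
    + destruct (lohi_ret n m ltac:(lia)) as [-> ->]. destruct (lohi_ret n (S m) ltac:(lia)) as [-> ->].
      exists (r - n + 2)%nat. rewrite c4. fold r. split. unfold NN in *; lia.
      replace (ind 1 (r - n + 1) (r - n + 2)) with false by (symmetry; apply ind_false; lia).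
      replace (ind 1 (S r - n + 1) (r - n + 2)) with true by (symmetry; apply ind_true; lia). congruence.
    + destruct (lohi_ret n m ltac:(lia)) as [-> ->]. destruct (lohi_fwd n (S m) ltac:(lia)) as [-> ->].
      exists n. split. lia. rewrite c3. fold r.
      replace (ind 1 (r - n + 1) n) with false by (symmetry; apply ind_false; unfold NN in *; lia).
      replace (ind (0 + 1) n n) with true by (symmetry; apply ind_true; lia). congruence.
  - intros M. destruct (INR_archimed 1 M ltac:(lra)) as [k Hk]. exists (NN n * k)%nat.
    unfold Tg. destruct (cycph_start n k hn) as [h1 h2].
    rewrite (psum_ext _ (fun _ => cc n X k)).
    + assert (forall j, psum (fun _ => cc n X k) j = INR j * cc n X k) by (induction j; cbn [psum]; [simpl; lra|rewrite IHj, S_INR; lra]).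
      rewrite H. pose proof (cc_grow n X HX hn k). assert (0 < INR n) by (apply INR_pos; lia).
      assert (INR k + 1 <= INR n * cc n X k). { unfold Rdiv in H0. apply Rmult_le_compat_l with (r := INR n) in H0; [|lra].
        replace (INR n * ((INR k + 1) * / INR n)) with (INR k + 1) in H0 by (field; lra). lra. } lra.
    + intros i Hi. rewrite Stc_fwd by lia. rewrite h1, h2. unfold lev; simpl.
      apply min_r'. left. apply yy_gt_cc; auto.
Qed.

Lemma psum_const a j : psum (fun _ => a) j = INR j * a.
Proof. induction j; cbn [psum]. simpl; lra. rewrite IHj, S_INR; lra. Qed.

Lemma sorted_avg v n j : (forall i, (1 <= i < n)%nat -> v i <= v (S i)) -> (1 <= j <= n)%nat ->
  INR n * psum v j <= INR j * psum v n.
Proof. intros Hs Hj.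
  assert (psum v j <= INR j * v j). { rewrite <- psum_const. apply psum_le. intros. apply (chain_le v n); auto; lia. }
  assert (psum (fun _ => v j) n - psum (fun _ => v j) j <= psum v n - psum v j).
  { apply psum_tail_le. lia. intros. apply (chain_le v n); auto; lia. }
  rewrite !psum_const in H0. assert (INR j <= INR n) by (apply le_INR; lia).
  assert (0 <= INR j) by apply pos_INR.
  assert ((INR n - INR j) * psum v j <= (INR n - INR j) * (INR j * v j)) by (apply Rmult_le_compat_l; lra).
  assert (INR j * ((INR n - INR j) * v j) <= INR j * (psum v n - psum v j)) by (apply Rmult_le_compat_l; lra).
  nra. Qed.

Lemma rho_psum y V j n rho : (1 <= j <= n)%nat ->
  (forall i, (1 <= i <= j)%nat -> rho * y i <= V i) -> (forall i, (j < i <= n)%nat -> V i <= rho * y i) ->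
  (forall i, (1 <= i <= n)%nat -> 0 <= y i) ->
  psum y j * psum V n <= psum V j * psum y n.
Proof. intros Hj H1 H2 Hy.
  assert (rho * psum y j <= psum V j) by (rewrite <- psum_scal; apply psum_le; auto).
  assert (psum V n - psum V j <= psum (fun i => rho * y i) n - psum (fun i => rho * y i) j) by (apply psum_tail_le; [lia|auto]).
  rewrite !psum_scal in H0.
  assert (psum (fun _ => 0) n - psum (fun _ => 0) j <= psum y n - psum y j) by (apply psum_tail_le; [lia|intros; apply Hy; lia]).
  rewrite !psum_const in H3.
  assert (0 <= psum y j) by (apply psum_nonneg; intros; apply Hy; lia).
  set (Yj := psum y j) in *. set (Vj := psum V j) in *. set (Yt := psum y n - Yj).
  replace (psum y n) with (Yj + Yt) by (unfold Yt; ring). replace (psum V n) with (Vj + (psum V n - Vj)) by ring.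
  assert (rho * Yj * Yt <= Vj * Yt) by (apply Rmult_le_compat_r; unfold Yt; lra).
  assert (Yj * (psum V n - Vj) <= Yj * (rho * Yt)) by (apply Rmult_le_compat_l; unfold Yt; lra).
  nra. Qed.

Lemma rho_min y n j u : (1 <= j <= n)%nat -> (forall i, (1 <= i < n)%nat -> y i <= y (S i)) ->
  (forall i, (1 <= i <= n)%nat -> 0 < y i) -> 0 <= u ->
  exists rho, (forall i, (1 <= i <= j)%nat -> rho * y i <= Rmin (y i) u) /\ (forall i, (j < i <= n)%nat -> Rmin (y i) u <= rho * y i).
Proof. intros Hj Hs Hy Hu. pose proof (Hy j Hj) as Hyj. destruct (Rle_dec (y j) u).
  - exists 1. split; intros i Hi; pose proof (Hy i ltac:(lia)).
    + assert (y i <= y j) by (apply (chain_le y n); auto; lia). unfold Rmin; destruct (Rle_dec _ _); lra.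
    + unfold Rmin; destruct (Rle_dec _ _); lra.
  - set (rho := u / y j). assert (rho * y j = u) by (unfold rho; field; lra).
    assert (0 <= rho <= 1). { split. unfold rho. unfold Rdiv; apply Rmult_le_pos; [lra|left; apply Rinv_0_lt_compat; lra].
      apply Rmult_le_reg_r with (y j); auto. rewrite H. lra. }
    exists rho. split; intros i Hi; pose proof (Hy i ltac:(lia)).
    + assert (y i <= y j) by (apply (chain_le y n); auto; lia). unfold Rmin; destruct (Rle_dec _ _); nra.
    + assert (y j <= y i) by (apply (chain_le y n); auto; lia). unfold Rmin; destruct (Rle_dec _ _); nra.
Qed.

Lemma rho_max y n j u : (1 <= j <= n)%nat -> (forall i, (1 <= i < n)%nat -> y i <= y (S i)) ->
  (forall i, (1 <= i <= n)%nat -> 0 < y i) ->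
  exists rho, (forall i, (1 <= i <= j)%nat -> rho * y i <= Rmax (y i) u) /\ (forall i, (j < i <= n)%nat -> Rmax (y i) u <= rho * y i).
Proof. intros Hj Hs Hy. pose proof (Hy j Hj) as Hyj. destruct (Rle_dec u (y j)).
  - exists 1. split; intros i Hi; pose proof (Hy i ltac:(lia)).
    + unfold Rmax; destruct (Rle_dec _ _); lra.
    + assert (y j <= y i) by (apply (chain_le y n); auto; lia). unfold Rmax; destruct (Rle_dec _ _); lra.
  - set (rho := u / y j). assert (rho * y j = u) by (unfold rho; field; lra).
    assert (1 <= rho). { apply Rmult_le_reg_r with (y j); auto. rewrite H. lra. }
    exists rho. split; intros i Hi; pose proof (Hy i ltac:(lia)).
    + assert (y i <= y j) by (apply (chain_le y n); auto; lia). unfold Rmax; destruct (Rle_dec _ _); nra.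
    + assert (y j <= y i) by (apply (chain_le y n); auto; lia). unfold Rmax; destruct (Rle_dec _ _); nra.
Qed.

Definition vform n y (V : nat -> R) := exists u, 0 <= u /\
  ((forall i, (1 <= i <= n)%nat -> V i = Rmin (y i) u) \/ (forall i, (1 <= i <= n)%nat -> V i = Rmax (y i) u)).

Lemma vform_ineq n y V j : vform n y V -> (1 <= j <= n)%nat -> (forall i, (1 <= i < n)%nat -> y i <= y (S i)) ->
  (forall i, (1 <= i <= n)%nat -> 0 < y i) -> psum y j * psum V n <= psum V j * psum y n.
Proof. intros [u [Hu [HV|HV]]] Hj Hs Hy.
  - destruct (rho_min y n j u Hj Hs Hy Hu) as [rho [H1 H2]]. apply (rho_psum _ _ _ _ rho Hj).
    intros; rewrite HV by lia; auto. intros; rewrite HV by lia; auto. intros; left; auto.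
  - destruct (rho_max y n j u Hj Hs Hy) as [rho [H1 H2]]. apply (rho_psum _ _ _ _ rho Hj).
    intros; rewrite HV by lia; auto. intros; rewrite HV by lia; auto. intros; left; auto.
Qed.

Lemma yy_sorted n X (HX : Xok n X) (hn : (2 <= n)%nat) k : forall i, (1 <= i < n)%nat -> yy n X k i <= yy n X k (S i).
Proof. intros. left. apply yy_incr; auto. Qed.
Lemma yy_pos n X (HX : Xok n X) (hn : (2 <= n)%nat) k : forall i, (1 <= i <= n)%nat -> 0 < yy n X k i.
Proof. intros. pose proof (yy_gt_cc n X HX hn k i H). pose proof (cc_pos n X HX hn k). lra. Qed.

Lemma vform_m n X (HX : Xok n X) (hn : (2 <= n)%nat) m : vform n (yy n X (cyc n m)) (Stc n X m).
Proof. destruct (Nat.lt_ge_cases (ph n m) n).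
  - exists (lev n X (cyc n m) (ph n m)). split. left; apply lev_pos; auto; lia. left. intros; apply Stc_fwd; auto.
  - exists (yy n X (cyc n m) (ph n m - n + 1)). pose proof (ph_lt n m hn). unfold NN in *.
    split. left; apply yy_pos; auto; lia. right. intros; apply Stc_ret; auto. Qed.

Lemma vform_Sm n X (HX : Xok n X) (hn : (2 <= n)%nat) m : vform n (yy n X (cyc n m)) (Stc n X (S m)).
Proof. destruct (trans_cases n m hn) as [[c1 [c2 c3]]|[[c1 [c2 c3]]|[[c1 [c2 [c3 c4]]]|[c1 [c2 c3]]]]];
  try (rewrite <- c2; apply vform_m; auto); try (rewrite <- c3; apply vform_m; auto).
  exists (yy n X (cyc n m) n). split. left; apply yy_pos; auto; lia. right. intros i Hi.
  rewrite Stc_fwd by lia. rewrite c2, c3. unfold lev; simpl Nat.eqb; cbv iota. rewrite cc_Sy.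
  rewrite min_r' by (left; rewrite <- cc_Sy; apply yy_gt_cc; auto).
  rewrite max_r' by (apply yy_le; auto; lia). auto. Qed.

Definition alpha n X k j := psum (yy n X k) j / psum (yy n X k) n.

Lemma yy_sum_pos n X (HX : Xok n X) (hn : (2 <= n)%nat) k : 0 < psum (yy n X k) n.
Proof. apply Rlt_le_trans with (yy n X k n). apply yy_pos; auto; lia.
  apply psum_term. intros; left; apply yy_pos; auto. lia. Qed.

Lemma vert_alpha n X (HX : Xok n X) (hn : (2 <= n)%nat) k V j : vform n (yy n X k) V -> (1 <= j <= n)%nat ->
  alpha n X k j * psum V n <= psum V j.
Proof. intros HV Hj. pose proof (vform_ineq n _ V j HV Hj (yy_sorted n X HX hn k) (yy_pos n X HX hn k)).
  pose proof (yy_sum_pos n X HX hn k). unfold alpha.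
  apply Rmult_le_reg_r with (psum (yy n X k) n); auto.
  replace (psum (yy n X k) j / psum (yy n X k) n * psum V n * psum (yy n X k) n) with (psum (yy n X k) j * psum V n) by (field; lra).
  lra. Qed.

Definition Pc n X := Pgen n (Stc n X) (loc n) (hic n).

Lemma piece_lower n X (HX : Xok n X) (hn : (2 <= n)%nat) m j t : (1 <= j <= n)%nat ->
  Tg n (Stc n X) m <= t <= Tg n (Stc n X) (S m) ->
  alpha n X (cyc n m) j * t <= psum (fun i => Pc n X i t) j.
Proof. intros Hj Ht. pose proof (good_c n X HX hn) as Gd.
  set (a := alpha n X (cyc n m) j).
  pose proof (vert_alpha n X HX hn (cyc n m) _ j (vform_m n X HX hn m) Hj) as V1.
  pose proof (vert_alpha n X HX hn (cyc n m) _ j (vform_Sm n X HX hn m) Hj) as V2.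
  fold a in V1, V2. fold (Tg n (Stc n X) m) in V1. fold (Tg n (Stc n X) (S m)) in V2.
  set (vl := val (loc n m) (hic n m)).
  assert (E1 : psum (fun i => Pc n X i t) j = psum (Stc n X m) j + (t - Tg n (Stc n X) m) * psum vl j).
  { rewrite <- psum_scal, <- psum_plus. apply psum_ext. intros i Hi. unfold Pc. rewrite (P_closed _ _ _ _ Gd m); auto. lia. }
  assert (E2 : psum (Stc n X (S m)) j = psum (Stc n X m) j + (Tg n (Stc n X) (S m) - Tg n (Stc n X) m) * psum vl j).
  { rewrite <- psum_scal, <- psum_plus. apply psum_ext. intros i Hi. apply (step_val _ _ _ _ Gd). lia. }
  rewrite E1. rewrite E2 in V2.
  assert (0 <= (psum (Stc n X m) j - a * Tg n (Stc n X) m) + (t - Tg n (Stc n X) m) * (psum vl j - a)).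
  { apply (affine_nonneg _ _ (Tg n (Stc n X) (S m) - Tg n (Stc n X) m)); lra. }
  lra. Qed.

Lemma psum_wt_le n j : (2 <= n)%nat -> (j <= n)%nat -> 0 <= psum (wt n) j <= 1.
Proof. intros hn Hj. assert (0 < INR n) by (apply INR_pos; lia).
  rewrite (psum_ext _ (fun i => / (INR n * INR n) * INR i)) by (intros; unfold wt, Rdiv; ring).
  rewrite psum_scal. assert (0 <= psum INR j) by (apply psum_nonneg; intros; apply pos_INR).
  assert (psum INR j <= psum (fun _ => INR n) j) by (apply psum_le; intros; apply le_INR; lia).
  rewrite psum_const in H1. assert (INR j <= INR n) by (apply le_INR; lia).
  assert (0 < / (INR n * INR n)) by (apply Rinv_0_lt_compat; nra).
  split. apply Rmult_le_pos; lra. apply Rle_trans with (/ (INR n * INR n) * (INR n * INR n)).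
  apply Rmult_le_compat_l. lra. apply Rle_trans with (INR j * INR n); auto. apply Rmult_le_compat_r; lra.
  rewrite Rinv_l; [lra|]. apply Rgt_not_eq. nra. Qed.

Lemma alpha_bounds n X (HX : Xok n X) (hn : (2 <= n)%nat) k j : (1 <= j <= n)%nat ->
  psum (X k) j - dl k <= alpha n X k j <= psum (X k) j + dl k.
Proof. intros Hj. unfold alpha.
  assert (Ey : forall jj, psum (yy n X k) jj = (cc n X k * 2 / xp n X k 1%nat) * psum (xp n X k) jj).
  { intros. rewrite <- psum_scal. apply psum_ext. intros. unfold yy, zz. unfold Rdiv. ring. }
  rewrite !Ey. pose proof (cc_pos n X HX hn k). pose proof (xp1_pos n X HX hn k).
  assert (0 < cc n X k * 2 / xp n X k 1%nat) by (unfold Rdiv; apply Rmult_lt_0_compat; [lra|apply Rinv_0_lt_compat; lra]).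
  assert (Ex : forall jj, psum (xp n X k) jj = psum (X k) jj + dl k * psum (wt n) jj).
  { intros. unfold xp. rewrite psum_plus, psum_scal. auto. }
  rewrite !Ex. destruct (HX k) as [_ [_ Hsum]].
  assert (0 <= psum (X k) j) by (apply psum_nonneg; intros; apply (X_nonneg n X HX); lia).
  assert (psum (X k) j <= psum (X k) n) by (apply psum_mono; [lia|intros; apply (X_nonneg n X HX); lia]).
  pose proof (psum_wt_le n j hn ltac:(lia)). pose proof (psum_wt_le n n hn ltac:(lia)).
  pose proof (dl_pos k). assert (dl k <= 1/2) by (unfold dl; pose proof (pos_INR k);
     apply Rle_trans with (/2); [apply Rinv_le_contravar; lra | lra]).
  rewrite Hsum in *. set (c := cc n X k * 2 / xp n X k 1%nat) in *.
  assert (0 < 1 + dl k * psum (wt n) n) by nra.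
  replace (c * (psum (X k) j + dl k * psum (wt n) j) / (c * (1 + dl k * psum (wt n) n)))
    with ((psum (X k) j + dl k * psum (wt n) j) / (1 + dl k * psum (wt n) n)) by (field; split; lra).
  assert (psum (X k) j * psum (wt n) n <= 1) by (apply Rle_trans with (1 * 1); [apply Rmult_le_compat; lra|lra]).
  assert (0 <= dl k * psum (wt n) j) by (apply Rmult_le_pos; lra).
  assert (0 <= dl k * (1 - psum (X k) j * psum (wt n) n)) by (apply Rmult_le_pos; lra).
  assert (0 <= dl k * dl k * psum (wt n) n) by (apply Rmult_le_pos; [nra|lra]).
  split.
  - apply Rmult_le_reg_r with (1 + dl k * psum (wt n) n); auto. unfold Rdiv. rewrite Rmult_assoc, Rinv_l by lra. nra.
  - apply Rmult_le_reg_r with (1 + dl k * psum (wt n) n); auto. unfold Rdiv. rewrite Rmult_assoc, Rinv_l by lra. nra.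
Qed.

Lemma start_val n X (HX : Xok n X) (hn : (2 <= n)%nat) k i : (1 <= i <= n)%nat -> Stc n X (NN n * k) i = cc n X k.
Proof. intros Hi. destruct (cycph_start n k hn) as [h1 h2]. rewrite Stc_fwd by lia. rewrite h1, h2.
  unfold lev; simpl. apply min_r'. left. apply yy_gt_cc; auto. Qed.

Lemma start_T n X (HX : Xok n X) (hn : (2 <= n)%nat) k : Tg n (Stc n X) (NN n * k) = INR n * cc n X k.
Proof. unfold Tg. rewrite (psum_ext _ (fun _ => cc n X k)). apply psum_const. intros; apply start_val; auto. Qed.

Lemma start_T_ge n X (HX : Xok n X) (hn : (2 <= n)%nat) k : INR k + 1 <= Tg n (Stc n X) (NN n * k).
Proof. rewrite start_T by auto. pose proof (cc_grow n X HX hn k). assert (0 < INR n) by (apply INR_pos; lia).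
  unfold Rdiv in H. apply Rmult_le_compat_l with (r := INR n) in H; [|lra].
  replace (INR n * ((INR k + 1) * / INR n)) with (INR k + 1) in H by (field; lra). lra. Qed.

Lemma target_val n X (HX : Xok n X) (hn : (2 <= n)%nat) k i : (1 <= i <= n)%nat -> Stc n X (NN n * k + n) i = yy n X k i.
Proof. intros Hi. destruct (cycph_char n (NN n * k + n) k n hn ltac:(unfold NN; lia) eq_refl) as [h1 h2].
  rewrite Stc_ret by lia. rewrite h1, h2. replace (n - n + 1)%nat with 1%nat by lia.
  apply max_l'. apply yy_le; auto; lia. Qed.

Lemma f_eq (P : nat -> R -> R) j q : q <> 0 -> psi j (fun i => P i q / q) = psum (fun i => P i q) j / q.
Proof. intros. unfold psi. rewrite (psum_ext _ (fun i => / q * P i q)) by (intros; unfold Rdiv; ring).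
  rewrite psum_scal. unfold Rdiv. ring. Qed.

Lemma psi_E_ge (X : nat -> nat -> R) k j : psi j (X k) = psum (X k) j.
Proof. reflexivity. Qed.

Definition spec (E : (nat -> R) -> Prop) j (N : nat) x := forall x'', E x'' -> psi j x <= psi j x'' + / (INR N + 1).

Lemma pick_ex n (E : (nat -> R) -> Prop) (hne : exists x, E x) k :
  exists x, E x /\ ((exists x', E x' /\ spec E (k mod n + 1) (k / n) x') -> spec E (k mod n + 1) (k / n) x).
Proof. destruct (classic (exists x', E x' /\ spec E (k mod n + 1) (k / n) x')) as [[x [h1 h2]]|h].
  exists x; auto. destruct hne as [x hx]. exists x. split; auto. intros; contradiction. Qed.

Lemma inv_lt_eps N eps : eps > 0 -> INR N * eps > 1 -> / (INR N + 1) < eps.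
Proof. intros. pose proof (pos_INR N). apply Rmult_lt_reg_r with (INR N + 1). lra.
  rewrite Rinv_l by lra. nra. Qed.

Theorem mainTheorem10 (n : nat) (E : (nat -> R) -> Prop)
  (hn : (2 <= n)%nat)
  (hE : forall x, E x -> in_Delta_bar n x)
  (hne : exists x, E x) :
  exists P : nat -> R -> R,
    gen_n_system n 1 P /\
    forall j, (1 <= j <= n)%nat ->
      (forall m, is_inf (fun y => exists x, E x /\ y = psi j x) m ->
         is_liminf_infty (fun q => psi j (fun i => P i q / q)) m) /\
      is_limsup_infty (fun q => psi j (fun i => P i q / q)) (INR j / INR n).
Proof.
  set (X := fun k => proj1_sig (constructive_indefinite_description _ (pick_ex n E hne k))).
  assert (HXp : forall k, E (X k) /\ ((exists x', E x' /\ spec E (k mod n + 1) (k / n) x') -> spec E (k mod n + 1) (k / n) (X k))).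
  { intros k. unfold X. destruct (constructive_indefinite_description _ _). simpl. auto. }
  assert (HX : Xok n X) by (intros k; apply hE, HXp).
  pose proof (good_c n X HX hn) as Gd.
  exists (Pc n X). split. apply P_gen; auto.
  intros j Hj.
  assert (Hf : forall q, 1 <= q -> psi j (fun i => Pc n X i q / q) = psum (fun i => Pc n X i q) j / q).
  { intros; apply f_eq; lra. }
  assert (Hstart : forall k, psi j (fun i => Pc n X i (Tg n (Stc n X) (NN n * k)) / Tg n (Stc n X) (NN n * k)) = INR j / INR n).
  { intros k. pose proof (start_T_ge n X HX hn k). rewrite Hf by (pose proof (pos_INR k); lra).
    rewrite (psum_ext _ (fun _ => cc n X k)).
    rewrite start_T by auto. rewrite psum_const. pose proof (cc_pos n X HX hn k). assert (0 < INR n) by (apply INR_pos; lia). field. lra.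
    intros i Hi. unfold Pc. rewrite P_at_T by auto. apply start_val; auto; lia. }
  split.
  - intros m0 [Hlb Hglb]. intros eps Heps. split.
    + destruct (INR_archimed eps 1 Heps) as [K HK].
      exists (Tg n (Stc n X) (NN n * K)). intros q Hq.
      pose proof (start_T_ge n X HX hn K). pose proof (pos_INR K).
      pose proof (idx_spec _ _ _ _ Gd q ltac:(lra)) as Hs. set (m := idx n (Stc n X) q) in *.
      assert (Hm : (NN n * K <= m)%nat).
      { destruct (Nat.lt_ge_cases m (NN n * K)); auto. pose proof (T_mono _ _ _ _ Gd (S m) (NN n * K) H1). lra. }
      assert (Hc : (K <= cyc n m)%nat).
      { pose proof (cycph_eq n m). pose proof (ph_lt n m hn). set (N := NN n) in *. set (c := cyc n m) in *.
        destruct (Nat.lt_ge_cases c K); auto. assert (N * (S c) <= N * K)%nat by (apply Nat.mul_le_mono_l; lia).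
        rewrite Nat.mul_succ_r in H4. lia. }
      pose proof (piece_lower n X HX hn m j q Hj ltac:(lra)).
      pose proof (alpha_bounds n X HX hn (cyc n m) j Hj).
      assert (m0 <= psum (X (cyc n m)) j) by (apply Hlb; exists (X (cyc n m)); split; [apply HXp|reflexivity]).
      assert (dl (cyc n m) < eps).
      { apply Rle_lt_trans with (/ (INR (cyc n m) + 1)). apply dl_le.
        apply Rle_lt_trans with (/ (INR K + 1)). apply Rinv_le_contravar. lra. apply le_INR in Hc. lra.
        apply inv_lt_eps; auto. }
      rewrite Hf by lra. apply Rlt_le_trans with (alpha n X (cyc n m) j). lra.
      apply Rmult_le_reg_r with q. lra. unfold Rdiv. rewrite Rmult_assoc, Rinv_l by lra. lra.
    + intros Q. destruct (INR_archimed eps 2 Heps) as [N1 HN1]. destruct (INR_archimed 1 Q ltac:(lra)) as [N2 HN2].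
      set (N0 := (N1 + N2)%nat). assert (INR N1 <= INR N0) by (apply le_INR; unfold N0; lia).
      assert (INR N2 <= INR N0) by (apply le_INR; unfold N0; lia).
      set (eta := / (INR N0 + 1)). pose proof (pos_INR N0).
      assert (Heta : 2 * eta < eps).
      { unfold eta. apply Rmult_lt_reg_r with (INR N0 + 1). lra. rewrite Rmult_assoc, Rinv_l by lra. nra. }
      assert (eta > 0) by (unfold eta; apply Rinv_0_lt_compat; lra).
      set (k := (n * N0 + (j - 1))%nat).
      assert (Hkd : (k / n = N0)%nat) by (symmetry; apply (Nat.div_unique _ _ _ (j - 1)); unfold k; lia).
      assert (Hkm : (k mod n + 1 = j)%nat).
      { assert (h : (j - 1 = k mod n)%nat) by (apply (Nat.mod_unique k n N0 (j - 1)); unfold k; lia). lia. }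
      destruct (HXp k) as [HXE HXs]. rewrite Hkd, Hkm in HXs.
      assert (Hex : exists x', E x' /\ spec E j N0 x').
      { apply NNPP. intros Hno. assert (m0 + eta <= m0). apply Hglb. intros y [x [Hx ->]].
        destruct (Rle_dec (m0 + eta) (psi j x)); auto. exfalso. apply Hno. exists x. split; auto.
        intros x'' Hx''. assert (m0 <= psi j x'') by (apply Hlb; exists x''; auto). fold eta. lra. lra. }
      specialize (HXs Hex).
      assert (HXk : psum (X k) j - eta <= m0).
      { apply Hglb. intros y [x [Hx ->]]. specialize (HXs x Hx). fold eta in HXs. unfold psi in *. lra. }
      pose proof (alpha_bounds n X HX hn k j Hj).
      assert (dl k <= eta). { apply Rle_trans with (/ (INR k + 1)). apply dl_le. unfold eta.
        apply Rinv_le_contravar. lra. assert (INR N0 <= INR k) by (apply le_INR; unfold k; nia). lra. }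
      set (q := Tg n (Stc n X) (NN n * k + n)). exists q.
      assert (Hq : Tg n (Stc n X) (NN n * k) <= q) by (apply (T_mono _ _ _ _ Gd); lia).
      pose proof (start_T_ge n X HX hn k). assert (INR N0 <= INR k) by (apply le_INR; unfold k; nia).
      split. lra.
      assert (Eq : forall i, (1 <= i <= n)%nat -> Pc n X i q = yy n X k i).
      { intros i Hi. unfold Pc, q. rewrite P_at_T by auto. apply target_val; auto. }
      assert (Hqs : q = psum (yy n X k) n) by (unfold q, Tg; apply psum_ext; intros; apply target_val; auto).
      rewrite Hf by lra. rewrite (psum_ext _ (yy n X k)) by (intros; apply Eq; lia).
      rewrite Hqs. fold (alpha n X k j). lra.
  - intros eps Heps. split.
    + exists 1. intros q Hq. rewrite Hf by lra. destruct (P_G1 _ _ _ _ Gd q ltac:(lra)) as [_ [Hs Hsum]].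
      pose proof (sorted_avg (fun i => Pc n X i q) n j Hs Hj). fold (Pc n X) in Hsum. rewrite Hsum in H.
      assert (0 < INR n) by (apply INR_pos; lia).
      assert (psum (fun i => Pc n X i q) j / q <= INR j / INR n).
      { apply Rmult_le_reg_r with (q * INR n). nra.
        replace (psum (fun i => Pc n X i q) j / q * (q * INR n)) with (INR n * psum (fun i => Pc n X i q) j) by (field; lra).
        replace (INR j / INR n * (q * INR n)) with (INR j * q) by (field; lra). lra. }
      lra.
    + intros Q. destruct (INR_archimed 1 Q ltac:(lra)) as [k Hk]. exists (Tg n (Stc n X) (NN n * k)).
      split. pose proof (start_T_ge n X HX hn k). lra. rewrite Hstart. lra.
Qed.
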